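(* Let $\alpha_1,\dots,\alpha_4$ be given constants, $H=H(t,t^-,q,q^-,p,p^-)$ a smooth delay Hamiltonian, and $X=\xi(t,q,p)\partial_t+\eta(t,q,p)\partial_q+\nu(t,q,p)\partial_p$ a generator such that the Hamiltonian is invariant, i.e. $$\Omega:=\nu^{-}(\alpha_{1}\dot{q}+\alpha_{2}\dot{q}^{-})+p^{-}(\alpha_{1}D(\eta)+\alpha_{2}D(\eta^{-}))+\nu(\alpha_{3}\dot{q}+\alpha_{4}\dot{q}^{-})+p(\alpha_{3}D(\eta)+\alpha_{4}D(\eta^{-}))+(\alpha_{2}p^{-}+\alpha_{4}p)\dot{q}^{-}D(\xi-\xi^{-})-\xi H_t-\eta H_q-\nu H_p-\xi^{-}H_{t^-}-\eta^{-}H_{q^-}-\nu^{-}H_{p^-}-HD(\xi)=0.$$ Then on the solutions of the local extremal equation $$F_H=\xi\frac{\delta\tilde H}{\delta t}+\eta\frac{\delta\tilde H}{\delta q}+\nu\frac{\delta\tilde H}{\delta p}=0$$ the differential-difference relation $D(C)=(S_+-1)P$ holds, where $C=\eta(\alpha_{4}p^{+}+(\alpha_{2}+\alpha_{3})p+\alpha_{1}p^{-})-\xi\big(\alpha_{2}(p\dot{q}-p^{-}\dot{q}^{-})+\alpha_{4}(p^{+}\dot{q}-p\dot{q}^{-})+H\big)$ and $P=(\alpha_{2}p^{-}+\alpha_{4}p)D(\eta^{-})+\nu^{-}(\alpha_{1}\dot{q}+\alpha_{2}\dot{q}^{-})-(\alpha_{2}p^{-}+\alpha_{4}p)\dot{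q}^{-}D(\xi^{-})-\xi^{-}H_{t^-}-\eta^{-}H_{q^-}-\nu^{-}H_{p^-}$.
   Context: Constant delay $\tau>0$; $t^\pm=t\pm\tau$, and $f^\pm=f(t\pm\tau)$ for functions of $t$; scalar dependent variables $q,p$. $S_\pm$ are the forward/backward shift operators on expressions (shifting all arguments by one step: $S_+$ sends $t^-,t,q^-,q,p^-,p,\dots$ to $t,t^+,q,q^+,p,p^+,\dots$); $\xi^\pm=S_\pm(\xi)$ etc.; $H^+=S_+(H)$. $D$ is the total derivative acting on variables at the points $t^-,t,t^+$ ($D=\partial_t+\dot q\partial_q+\dot p\partial_p+\ddot q\partial_{\dot q}+\cdots$ plus the analogous terms at $t^-$ and $t^+$). $\tilde H=p^{-}(\alpha_{1}\dot{q}+\alpha_{2}\dot{q}^{-})+p(\alpha_{3}\dot{q}+\alpha_{4}\dot{q}^{-})-H$, with $\frac{\delta\tilde H}{\delta p}=\alpha_1\dot q^++(\alpha_2+\alpha_3)\dot q+\alpha_4\dot q^--\partial_p(H+H^+)$, $\frac{\delta\tilde H}{\delta q}=-\big(\alpha_4\dot p^++(\alpha_2+\alpha_3)\dot p+\alpha_1\dot p^-+\partial_q(H+H^+)\big)$, $\frac{\delta\tilde H}{\delta t}=D[\alpha_2(p\dot q-p^-\dot q^-)+\alpha_4(p^+\dot q-p\dot q^-)]+D(H)-\partial_t(H+H^+)$. The equation is considered together with the delay equation $t^+-t=t-t^-=\tau$. The quantity $\Omega$ equals $X(\tilde H)+\tilde HD(\xi)$ for the prolonged generator. *)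

(* Defs.v *)
From HB Require Import structures.
From mathcomp Require Import all_boot all_order all_algebra.
From mathcomp Require Import all_classical all_reals all_analysis.
Set Implicit Arguments. Unset Strict Implicit. Unset Printing Implicit Defensive.
Import Order.TTheory GRing.Theory Num.Theory.
Import numFieldNormedType.Exports.
Local Open Scope ring_scope.

Section DelayHam.
Variable R : realType.

(* points of R^6 = (t, t^-, q, q^-, p, p^-) and R^3 = (t, q, p) *)
Definition pt6 (a b c d e f : R) : 'rV[R]_6 := \row_(i < 6) [:: a; b; c; d; e; f]`_i.
Definition pt3 (a b c : R) : 'rV[R]_3 := \row_(i < 3) [:: a; b; c]`_i.

Definition partial n (f : 'rV[R]_n -> R) (i : 'I_n) (x : 'rV[R]_n) : R :=
  'D_(delta_mx 0 i) f x.

Definition i_t  : 'I_6 := @Ordinal 6 0 isT.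
Definition i_tm : 'I_6 := @Ordinal 6 1 isT.
Definition i_q  : 'I_6 := @Ordinal 6 2 isT.
Definition i_qm : 'I_6 := @Ordinal 6 3 isT.
Definition i_p  : 'I_6 := @Ordinal 6 4 isT.
Definition i_pm : 'I_6 := @Ordinal 6 5 isT.

Variables (tau a1 a2 a3 a4 : R) (H : 'rV[R]_6 -> R) (xi eta nu : 'rV[R]_3 -> R).

Section Traj.
(* a trajectory t |-> (q(t), p(t)), with t^- = t - tau, t^+ = t + tau *)
Variables q p : R -> R.

Definition dq := derive1 q.
Definition dp := derive1 p.

Definition zH (t : R) : 'rV[R]_6 :=
  pt6 t (t - tau) (q t) (q (t - tau)) (p t) (p (t - tau)).

(* H, and its partial derivatives, evaluated along the trajectory at time t;
   the "+" shifted version H^+ is Hc (t + tau) etc. *)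
Definition Hc (t : R) : R := H (zH t).
Definition Hd (i : 'I_6) (t : R) : R := partial H i (zH t).

Definition gxi  (t : R) : R := xi  (pt3 t (q t) (p t)).
Definition geta (t : R) : R := eta (pt3 t (q t) (p t)).
Definition gnu  (t : R) : R := nu  (pt3 t (q t) (p t)).

Definition shm (f : R -> R) (t : R) : R := f (t - tau).

Definition Dt (f : R -> R) (t : R) : R := derive1 f t.

(* Omega = X(tilde H) + tilde H D(xi) *)
Definition Omega (t : R) : R :=
  gnu (t - tau) * (a1 * dq t + a2 * dq (t - tau))
  + p (t - tau) * (a1 * Dt geta t + a2 * Dt (shm geta) t)
  + gnu t * (a3 * dq t + a4 * dq (t - tau))
  + p t * (a3 * Dt geta t + a4 * Dt (shm geta) t)
  + (a2 * p (t - tau) + a4 * p t) * dq (t - tau)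
      * Dt (fun s => gxi s - shm gxi s) t
  - gxi t * Hd i_t t - geta t * Hd i_q t - gnu t * Hd i_p t
  - gxi (t - tau) * Hd i_tm t - geta (t - tau) * Hd i_qm t
  - gnu (t - tau) * Hd i_pm t
  - Hc t * Dt gxi t.

Definition Wf (t : R) : R :=
  a2 * (p t * dq t - p (t - tau) * dq (t - tau))
  + a4 * (p (t + tau) * dq t - p t * dq (t - tau)).

(* variational derivatives of tilde H (given in the context) *)
Definition dHt_dt (t : R) : R :=
  Dt Wf t + Dt Hc t - (Hd i_t t + Hd i_tm (t + tau)).
Definition dHt_dq (t : R) : R :=
  - (a4 * dp (t + tau) + (a2 + a3) * dp t + a1 * dp (t - tau)
     + (Hd i_q t + Hd i_qm (t + tau))).
Definition dHt_dp (t : R) : R :=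
  a1 * dq (t + tau) + (a2 + a3) * dq t + a4 * dq (t - tau)
  - (Hd i_p t + Hd i_pm (t + tau)).

Definition FH (t : R) : R :=
  gxi t * dHt_dt t + geta t * dHt_dq t + gnu t * dHt_dp t.

Definition Cf (t : R) : R :=
  geta t * (a4 * p (t + tau) + (a2 + a3) * p t + a1 * p (t - tau))
  - gxi t * (Wf t + Hc t).

Definition Pf (t : R) : R :=
  (a2 * p (t - tau) + a4 * p t) * Dt (shm geta) t
  + gnu (t - tau) * (a1 * dq t + a2 * dq (t - tau))
  - (a2 * p (t - tau) + a4 * p t) * dq (t - tau) * Dt (shm gxi) t
  - gxi (t - tau) * Hd i_tm t - geta (t - tau) * Hd i_qm t
  - gnu (t - tau) * Hd i_pm t.

End Traj.

Definition regular_traj (q p : R -> R) : Prop :=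
  (forall t, derivable q t 1) /\ (forall t, derivable (derive1 q) t 1)
  /\ (forall t, derivable p t 1).

End DelayHam.

(* Main.v *)
Require Import Defs.
From HB Require Import structures.
From mathcomp Require Import all_boot all_order all_algebra.
From mathcomp Require Import all_classical all_reals all_analysis.
From mathcomp Require Import ring.
Import Order.TTheory GRing.Theory Num.Theory.
Import numFieldNormedType.Exports.
Local Open Scope ring_scope.

Section Aux.
Variable R : realType.
Implicit Types (f g : R -> R) (t c : R).

Lemma Dt_shift f c t : Dt (fun s => f (s + c)) t = Dt f (t + c).
Proof.
rewrite /Dt /derive1.
suff -> : (fun h : R => h^-1 *: ((fun s => f (s+c)) (h + t) - (fun s => f (s+c)) t)) =
  (fun h => h^-1 *: (f (h + (t+c)) - f (t+c))) by [].
by apply/funext => h /=; rewrite addrA.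
Qed.

Lemma der_shift f c t : derivable f (t + c) 1 -> derivable (fun s => f (s + c)) t 1.
Proof.
rewrite /derivable.
suff -> : (fun h : R => h^-1 *: (((fun s => f (s+c)) \o shift t) (h *: 1) - (fun s => f (s+c)) t)) =
  (fun h => h^-1 *: ((f \o shift (t + c)) (h *: 1) - f (t+c))) by [].
by apply/funext => h /=; rewrite addrA.
Qed.

Lemma DtD f g t : derivable f t 1 -> derivable g t 1 ->
  Dt (fun s => f s + g s) t = Dt f t + Dt g t.
Proof. by move=> df dg; rewrite /Dt !derive1E; exact: (deriveD df dg). Qed.
Lemma DtB f g t : derivable f t 1 -> derivable g t 1 ->
  Dt (fun s => f s - g s) t = Dt f t - Dt g t.
Proof. by move=> df dg; rewrite /Dt !derive1E; exact: (deriveB df dg). Qed.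
Lemma DtM f g t : derivable f t 1 -> derivable g t 1 ->
  Dt (fun s => f s * g s) t = f t * Dt g t + g t * Dt f t.
Proof. by move=> df dg; rewrite /Dt !derive1E; exact: (deriveM df dg). Qed.
Lemma derD f g t : derivable f t 1 -> derivable g t 1 ->
  derivable (fun s => f s + g s) t 1.
Proof. by move=> df dg; exact: (derivableD df dg). Qed.
Lemma derB f g t : derivable f t 1 -> derivable g t 1 ->
  derivable (fun s => f s - g s) t 1.
Proof. by move=> df dg; exact: (derivableB df dg). Qed.
Lemma derM f g t : derivable f t 1 -> derivable g t 1 ->
  derivable (fun s => f s * g s) t 1.
Proof. by move=> df dg; exact: (derivableM df dg). Qed.
Lemma derC c t : derivable (fun _ : R => c) t 1.
Proof. exact: derivable_cst. Qed.
Lemma DtC c t : Dt (fun _ : R => c) t = 0.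
Proof. by rewrite /Dt derive1_cst. Qed.

Lemma pt3E (x y z : R) : pt3 x y z = x *: pt3 1 0 0 + y *: pt3 0 1 0 + z *: pt3 0 0 1.
Proof.
apply/rowP => i; rewrite !mxE; case: i => [[|[|[|//]]] ?] /=; rewrite ?mxE /=;
  by rewrite !mulr0 ?mulr1 ?addr0 ?add0r.
Qed.

Lemma pt6E (x1 x2 x3 x4 x5 x6 : R) : pt6 x1 x2 x3 x4 x5 x6 =
  x1 *: pt6 1 0 0 0 0 0 + x2 *: pt6 0 1 0 0 0 0 + x3 *: pt6 0 0 1 0 0 0
  + x4 *: pt6 0 0 0 1 0 0 + x5 *: pt6 0 0 0 0 1 0 + x6 *: pt6 0 0 0 0 0 1.
Proof.
apply/rowP => i; rewrite !mxE; case: i => [[|[|[|[|[|[|//]]]]]] ?] /=; rewrite ?mxE /=;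
  by rewrite !mulr0 ?mulr1 ?addr0 ?add0r.
Qed.

Lemma dfZ n (k : R -> R) (v : 'rV[R]_n) t : derivable k t 1 ->
  differentiable (fun s => k s *: v) t.
Proof. by move=> /derivable1_diffP dk; exact: differentiableZl. Qed.

Lemma dfD n (F G : R -> 'rV[R]_n) t : differentiable F t -> differentiable G t ->
  differentiable (fun s => F s + G s) t.
Proof. by move=> dF dG; exact: (differentiableD dF dG). Qed.

Lemma der_comp3 (f : 'rV[R]_3 -> R) (a b c : R -> R) t :
  (forall x, differentiable f x) ->
  derivable a t 1 -> derivable b t 1 -> derivable c t 1 ->
  derivable (fun s => f (pt3 (a s) (b s) (c s))) t 1.
Proof.
move=> df da db dc; apply/derivable1_diffP.
have -> : (fun s => f (pt3 (a s) (b s) (c s))) =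
  f \o (fun s => a s *: pt3 1 0 0 + b s *: pt3 0 1 0 + c s *: pt3 0 0 1).
  by apply/funext => s /=; rewrite -pt3E.
apply: differentiable_comp => //.
by apply: dfD; [apply: dfD|]; apply: dfZ.
Qed.

Lemma der_comp6 (f : 'rV[R]_6 -> R) (a b c d e g : R -> R) t :
  (forall x, differentiable f x) ->
  derivable a t 1 -> derivable b t 1 -> derivable c t 1 ->
  derivable d t 1 -> derivable e t 1 -> derivable g t 1 ->
  derivable (fun s => f (pt6 (a s) (b s) (c s) (d s) (e s) (g s))) t 1.
Proof.
move=> df da db dc dd de dg; apply/derivable1_diffP.
have -> : (fun s => f (pt6 (a s) (b s) (c s) (d s) (e s) (g s))) =
  f \o (fun s => a s *: pt6 1 0 0 0 0 0 + b s *: pt6 0 1 0 0 0 0 + c s *: pt6 0 0 1 0 0 0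
  + d s *: pt6 0 0 0 1 0 0 + e s *: pt6 0 0 0 0 1 0 + g s *: pt6 0 0 0 0 0 1).
  by apply/funext => s /=; rewrite -pt6E.
apply: differentiable_comp => //.
by repeat apply: dfD; apply: dfZ.
Qed.

End Aux.
Arguments derD {R f g t}. Arguments derB {R f g t}. Arguments derM {R f g t}.
Arguments DtD {R f g t}. Arguments derC {R}. Arguments DtC {R}. Arguments Dt_shift {R}. Arguments DtB {R f g t}. Arguments DtM {R f g t}.

Theorem theorem5 (R : realType) (tau a1 a2 a3 a4 : R)
    (H : 'rV[R]_6 -> R) (xi eta nu : 'rV[R]_3 -> R) :
  0 < tau ->
  (forall x, differentiable H x) ->
  (forall x, differentiable xi x) ->
  (forall x, differentiable eta x) ->
  (forall x, differentiable nu x) ->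
  (* invariance of the Hamiltonian: Omega vanishes identically *)
  (forall q p : R -> R, regular_traj q p ->
     forall t, Omega tau a1 a2 a3 a4 H xi eta nu q p t = 0) ->
  forall q p : R -> R, regular_traj q p ->
  (* (q,p) solves the local extremal equation F_H = 0 *)
  (forall t, FH tau a1 a2 a3 a4 H xi eta nu q p t = 0) ->
  forall t,
    Dt (Cf tau a1 a2 a3 a4 H xi eta q p) t =
    Pf tau a1 a2 a4 H xi eta nu q p (t + tau)
    - Pf tau a1 a2 a4 H xi eta nu q p t.
Proof.
move=> _ dH dxi deta dnu hOm q p reg hF t.
have hO := hOm q p reg t; have hFt := hF t.
case: reg => [Dq [Ddq Dp]].
have Did : forall t, derivable (fun s : R => s) t 1 by move=> *; exact: derivable_id.
have Dsh : forall (f : R -> R) c, (forall t, derivable f t 1) -> forall t, derivable (fun s => f (s + c)) t 1.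
  by move=> f c df s; apply: der_shift.
have Dxi : forall t, derivable (gxi xi q p) t 1.
  move=> s; exact: (@der_comp3 R xi (fun s => s) q p s dxi (Did s) (Dq s) (Dp s)).
have Deta : forall t, derivable (geta eta q p) t 1.
  move=> s; exact: (@der_comp3 R eta (fun s => s) q p s deta (Did s) (Dq s) (Dp s)).
have Dnu : forall t, derivable (gnu nu q p) t 1.
  move=> s; exact: (@der_comp3 R nu (fun s => s) q p s dnu (Did s) (Dq s) (Dp s)).
have DHc : forall t, derivable (Hc tau H q p) t 1.
  move=> s.
  have h1 : derivable (fun s : R => s - tau) s 1 by apply: derB; [exact: Did | exact: derC].
  exact: (@der_comp6 R H (fun s => s) (fun s => s - tau) q (fun s => q (s - tau)) p (fun s => p (s - tau)) s dH (Did s) h1 (Dq s) (Dsh q _ Dq s) (Dp s) (Dsh p _ Dp s)).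
have DW : forall t, derivable (Wf tau a2 a4 q p) t 1.
  move=> s.
  have dpm := Dsh p (- tau) Dp s. have dpp := Dsh p tau Dp s.
  have dqm := Dsh _ (- tau) Ddq s.
  exact: (derD (derM (derC a2 s) (derB (derM (Dp s) (Ddq s)) (derM dpm dqm)))
               (derM (derC a4 s) (derB (derM dpp (Ddq s)) (derM (Dp s) dqm)))).
suff e : Dt (Cf tau a1 a2 a3 a4 H xi eta q p) t -
    (Pf tau a1 a2 a4 H xi eta nu q p (t + tau) - Pf tau a1 a2 a4 H xi eta nu q p t)
  = Omega tau a1 a2 a3 a4 H xi eta nu q p t - FH tau a1 a2 a3 a4 H xi eta nu q p t.
  by apply/eqP; rewrite -subr_eq0 e hO hFt subr0.
have dpm := Dsh p (- tau) Dp t. have dpp := Dsh p tau Dp t.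
have dA := derD (derD (derM (derC a4 t) dpp) (derM (derC (a2 + a3) t) (Dp t))) (derM (derC a1 t) dpm).
have dL := derM (Deta t) dA.
have dWH := derD (DW t) (DHc t).
have dR := derM (Dxi t) dWH.
rewrite /Cf (DtB dL dR) (DtM (Deta t) dA) (DtM (Dxi t) dWH) (DtD (DW t) (DHc t)).
rewrite (DtD (derD (derM (derC a4 t) dpp) (derM (derC (a2 + a3) t) (Dp t))) (derM (derC a1 t) dpm)).
rewrite (DtD (derM (derC a4 t) dpp) (derM (derC (a2 + a3) t) (Dp t))).
rewrite (DtM (derC a4 t) dpp) (DtM (derC (a2 + a3) t) (Dp t)) (DtM (derC a1 t) dpm) !DtC.
rewrite (Dt_shift p tau) (Dt_shift p (- tau)).
rewrite /Omega /FH /dHt_dt /dHt_dq /dHt_dp /Pf /shm.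
rewrite (DtB (Dxi t) (Dsh _ (- tau) Dxi t)).
rewrite !(Dt_shift (geta eta q p) (- tau)) !(Dt_shift (gxi xi q p) (- tau)).
have -> : t + tau - tau = t by rewrite addrK.
rewrite /Dt /dp /dq.
have -> : Wf tau a2 a4 q p t = a2 * (p t * derive1 q t - p (t - tau) * derive1 q (t - tau))
  + a4 * (p (t + tau) * derive1 q t - p t * derive1 q (t - tau)) by [].
move: (derive1 q (t + tau)) => x0.
move: (derive1 q (t - tau)) => x1.
move: (derive1 q t) => x2.
move: (derive1 p (t + tau)) => x3.
move: (derive1 p (t - tau)) => x4.
move: (derive1 p t) => x5.
move: (p (t + tau)) => x6.
move: (p (t - tau)) => x7.
move: (p t) => x8.
move: (gxi xi q p (t + tau)) => x9.
move: (gxi xi q p (t - tau)) => x10.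
move: (gxi xi q p t) => x11.
move: (geta eta q p (t + tau)) => x12.
move: (geta eta q p (t - tau)) => x13.
move: (geta eta q p t) => x14.
move: (gnu nu q p (t + tau)) => x15.
move: (gnu nu q p (t - tau)) => x16.
move: (gnu nu q p t) => x17.
move: (derive1 (gxi xi q p) (t + tau)) => x18.
move: (derive1 (gxi xi q p) (t - tau)) => x19.
move: (derive1 (gxi xi q p) t) => x20.
move: (derive1 (geta eta q p) (t + tau)) => x21.
move: (derive1 (geta eta q p) (t - tau)) => x22.
move: (derive1 (geta eta q p) t) => x23.
move: (Wf tau a2 a4 q p t) => x24.
move: (derive1 (Wf tau a2 a4 q p) t) => x25.
move: (Hc tau H q p t) => x26.
move: (derive1 (Hc tau H q p) t) => x27.
move: (Hd tau H q p i_t (t + tau)) => x28.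
move: (Hd tau H q p i_t t) => x29.
move: (Hd tau H q p i_tm (t + tau)) => x30.
move: (Hd tau H q p i_tm t) => x31.
move: (Hd tau H q p i_q (t + tau)) => x32.
move: (Hd tau H q p i_q t) => x33.
move: (Hd tau H q p i_qm (t + tau)) => x34.
move: (Hd tau H q p i_qm t) => x35.
move: (Hd tau H q p i_p (t + tau)) => x36.
move: (Hd tau H q p i_p t) => x37.
move: (Hd tau H q p i_pm (t + tau)) => x38.
move: (Hd tau H q p i_pm t) => x39.

ring.
Qed.
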